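(* Let $\mathbb{A}\colon\mathbb{R}^d\to\mathbb{R}^d$ be Lipschitz continuous, $X_0\in\mathbb{R}^d$, $T>0$. (i) If $X$ solves the Anchor ODE $\dot X(t)=-\mathbb{A}(X(t))+\frac1t(X_0-X(t))$, $X(0)=X_0$, then $\dot X(t)=-\int_0^t H(t,s)\mathbb{A}(X(s))\,ds$ with H-kernel $H(t,s)=-\frac{s}{t^2}+\delta(s-t)$, i.e. $\dot X(t)=\frac{1}{t^2}\int_0^t s\,\mathbb{A}(X(s))\,ds-\mathbb{A}(X(t))$. (ii) The H-dual ODE, with kernel $H^A(t,s):=H(T-s,T-t)=-\frac{T-t}{(T-s)^2}+\delta(s-t)$, namely $\dot X(t)=\int_0^t\frac{T-t}{(T-s)^2}\mathbb{A}(X(s))\,ds-\mathbb{A}(X(t))$ on $[0,T)$ with $X(0)=X_0$, is the Dual-Anchor ODE: if $X$ solves it and $Z(t):=-\dot X(t)-\mathbb{A}(X(t))$, then $Z(0)=0$ and \[ \dot X(t)=-Z(t)-\mathbb{A}(X(t)),\qquad \dot Z(t)=-\frac{1}{T-t}Z(t)-\frac{1}{T-t}\mathbb{A}(X(t)). \] Hence the Anchor ODE and the Dual-Anchor ODE are H-duals of each other.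
   Context: An ODE is in H-kernel form with kernel $H(t,s)$ if $\dot X(t)=-\int_0^tH(t,s)\mathbb{A}(X(s))\,ds$, where $\delta$ denotes the Dirac delta with the convention $\int_0^t\delta(s-t)f(s)\,ds=f(t)$. For a fixed terminal time $T$, the H-dual ODE is the one with kernel $H^A(t,s)=H(T-s,T-t)$. *)

(* Defs.v *)
From HB Require Import structures.
From mathcomp Require Import all_boot all_order all_algebra.
From mathcomp Require Import all_classical all_reals all_analysis.
Set Implicit Arguments. Unset Strict Implicit. Unset Printing Implicit Defensive.
Import Order.TTheory GRing.Theory Num.Theory.
Import numFieldNormedType.Exports.
Local Open Scope classical_set_scope.
Local Open Scope ring_scope.

Definition vint (R : realType) (d : nat) (a b : R) (f : R -> 'rV[R]_d)
  : 'rV[R]_d :=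
  \row_i (\int[@lebesgue_measure R]_(s in `[a, b]) f s ord0 i).

(* Right-hand side of an ODE in H-kernel form whose kernel is
   H(t,s) = Hreg(t,s) + delta(s - t):
   Xdot(t) = - int_0^t H(t,s) A(X(s)) ds
           = - int_0^t Hreg(t,s) A(X(s)) ds - A(X(t)). *)
Definition hkernel_rhs (R : realType) (d : nat) (Hreg : R -> R -> R)
  (A : 'rV[R]_d -> 'rV[R]_d) (X : R -> 'rV[R]_d) (t : R) : 'rV[R]_d :=
  - vint 0 t (fun s => Hreg t s *: A (X s)) - A (X t).

(* H-dual kernel for terminal time T: H^A(t,s) = H(T-s, T-t).
   (The delta part delta(s-t) is invariant under this map.) *)
Definition hdual (R : realType) (T : R) (H : R -> R -> R) : R -> R -> R :=
  fun t s => H (T - s) (T - t).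

(* Regular part of the Anchor kernel H(t,s) = -s/t^2 + delta(s-t). *)
Definition anchor_Hreg (R : realType) : R -> R -> R :=
  fun t s => - (s / t ^+ 2).

Definition is_rderive (R : realType) (d : nat) (f : R -> 'rV[R]_d) (t : R)
  (v : 'rV[R]_d) : Prop :=
  h^-1 *: (f (h + t) - f t) @[h --> 0^'+] --> v.

(* Main.v *)
Require Import Defs.
From HB Require Import structures.
From mathcomp Require Import all_boot all_order all_algebra.
From mathcomp Require Import all_classical all_reals all_analysis.
From mathcomp Require Import ring lra.
Import Order.TTheory GRing.Theory Num.Theory.
Import numFieldNormedType.Exports.
Local Open Scope classical_set_scope.
Local Open Scope ring_scope.
Lemma lip_cont (R : realType) (V W : normedModType R) (A : V -> W) :
  lipschitz A -> continuous A.
Proof.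
move=> [M [Mr HM]] x.
have k0 : 0 < 1 + `|M| by rewrite ltr_pwDl.
have /= Hk := HM (1 + `|M|) (ltr_pwDl ltr01 (real_ler_norm Mr)).
apply/cvgrPdist_lt => e e0.
near=> y.
have := Hk (x, y) (conj I I); rewrite /= => /le_lt_trans; apply.
rewrite -ltr_pdivlMl //.
near: y; apply/nbhs_normP; exists ((1 + `|M|)^-1 * e) => /=; first by rewrite mulr_gt0 // invr_gt0.
by move=> z.
Unshelve. all: by end_near. Qed.

Lemma lip_cont_rV (R : realType) d (A : 'rV[R]_d -> 'rV[R]_d) :
  lipschitz A -> continuous A.
Proof. exact: lip_cont. Qed.

Section helpers1.
Context {R : realType} {d : nat}.

Lemma cvg_coord {T} (F : set_system T) {FF : Filter F} (f : T -> 'rV[R]_d) (l : 'rV[R]_d) i :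
  f @ F --> l -> (fun x => f x ord0 i) @ F --> l ord0 i.
Proof. move=> fl; have := @coord_continuous R 1 d ord0 i l. move=> h. Fail exact: (cvg_comp fl h). exact: (cvg_trans (cvg_app _ fl) h). Qed.

Lemma cvg_rowP {T} (F : set_system T) {FF : Filter F} (f : T -> 'rV[R]_d) (l : 'rV[R]_d) :
  (forall i, (fun x => f x ord0 i) @ F --> l ord0 i) -> f @ F --> l.
Proof.
move=> fl; apply/cvgrPdist_le => e e0.
have : \forall x \near F, forall i, `|l ord0 i - f x ord0 i| <= e.
  apply: filter_forall => i; exact: (cvgrPdist_le _ _).1 (fl i) e e0.
apply: filterS => x H.
rewrite /Num.Def.normr/= mx_normrE (bigmax_le _ (ltW e0))//= => -[i j] _.
by rewrite !mxE (ord1 i).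
Qed.

Lemma is_derive_coord (f : R -> 'rV[R]_d) t (df : 'rV[R]_d) i :
  is_derive t (1:R) f df -> is_derive t (1:R) (fun x => f x ord0 i) (df ord0 i).
Proof.
move=> [fd <-]; apply: DeriveDef; first by move/derivable_mxP: fd; apply.
by rewrite derive_mx // mxE.
Qed.

Lemma is_derive_row (f : R -> 'rV[R]_d) t (df : 'rV[R]_d) :
  (forall i, is_derive t (1:R) (fun x => f x ord0 i) (df ord0 i)) ->
  is_derive t (1:R) f df.
Proof.
move=> H.
have fd : derivable f t 1.
  apply/derivable_mxP => i j; rewrite (ord1 i); have [] := H j; done.
apply: DeriveDef => //; rewrite derive_mx //; apply/matrixP => i j.
by rewrite mxE (ord1 i) derive_val.
Qed.

Lemma Rint_FTC2 (f F : R -> R) a b : a < b ->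
  {within `[a, b], continuous f} ->
  derivable_oo_LRcontinuous F a b ->
  {in `]a, b[, (F^`())%classic =1 f} ->
  \int[lebesgue_measure]_(x in `[a, b]) f x = F b - F a.
Proof.
by move=> ab cf dF F'f; rewrite /Rintegral (continuous_FTC2 ab cf dF F'f).
Qed.

End helpers1.

Section helpers2.
Context {R : realType}.
Notation mu := (@lebesgue_measure R).

Lemma cint (f : R -> R) a b : {within `[a, b], continuous f} ->
  mu.-integrable `[a, b] (EFin \o f).
Proof. by move=> cf; apply: continuous_compact_integrable => //; exact: segment_compact. Qed.

Lemma rderiv_int (f : R -> R) b : 0 < b -> {within `[0, b], continuous f} ->
  (fun h => h^-1 * \int[mu]_(x in `[0, h]) f x) @ 0^'+ --> f 0.
Proof.
move=> b0 cf.
have [_ f0 _] := (continuous_within_itvP _ b0).1 cf.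
apply/cvgrPdist_le => e e0.
move/cvgrPdist_le: f0 => /(_ (e/2)) []; first by rewrite divr_gt0.
move=> δ /= δ0 Hδ.
near=> h.
have h0 : 0 < h by near: h; exact: nbhs_right_gt.
have hb : h < Num.min δ b.
  near: h; apply: nbhs_right_lt; by rewrite lt_min δ0 b0.
have hδ : h < δ by move: hb; rewrite lt_min => /andP[].
have hb' : h <= b by move: hb; rewrite lt_min => /andP[] _ /ltW.
have cfh : {within `[0, h], continuous f}.
  by apply: continuous_subspaceW cf; apply: subset_itvl; rewrite bnd_simp.
have cg : {within `[0, h], continuous (fun x => f 0 - f x)}.
  by move=> x; apply: cvgB; [exact: cvg_cst | exact: cfh].
have cag : {within `[0, h], continuous (fun x => `|f 0 - f x|)}.
  by move=> x; apply: cvg_norm; exact: cg.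
have cc : forall c : R, {within `[0, h], continuous (fun x : R => c)}.
  by move=> c x; exact: cvg_cst.
have muh : fine (mu `[0, h]) = h.
  by rewrite lebesgue_measure_itv /= lte_fin h0 /= subr0.
have E : f 0 - h^-1 * \int[mu]_(x in `[0, h]) f x =
         h^-1 * \int[mu]_(x in `[0, h]) (f 0 - f x).
  rewrite RintegralB //; [|exact: cint (cc _)|exact: cint].
  by rewrite Rintegral_cst // muh mulrBr mulrCA mulVf ?gt_eqF // mulr1.
rewrite E normrM ger0_norm ?invr_ge0 ?ltW //.
rewrite ltr_pdivrMl //.
apply: le_lt_trans (le_normr_Rintegral _ _) _ => //; first exact: cint.
apply: le_lt_trans (le_Rintegral (f2 := fun _ => e/2) _ _ _ _) _ => //.
- exact: cint.
- exact: cint (cc _).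
- move=> x xi; have /andP[] : (0 <= x <= h) by move: xi => /=; rewrite in_itv.
  rewrite le_eqVlt => /predU1P[<- _|x0 xh].
    by rewrite subrr normr0 divr_ge0 // ltW.
  apply: Hδ => //=; rewrite sub0r normrN gtr0_norm //.
  exact: le_lt_trans xh hδ.
- rewrite Rintegral_cst // muh mulrC ltr_pM2l // ltr_pdivrMr // ltr_pMr //.
  by rewrite ltr1n.
Unshelve. all: by end_near. Qed.

End helpers2.

Lemma part1 (R : realType) d (A : 'rV[R]_d -> 'rV[R]_d) (X0 : 'rV[R]_d) (T : R)
  (X dX : R -> 'rV[R]_d) :
  continuous A -> X 0 = X0 -> X x @[x --> 0^'+] --> X0 ->
  (forall t, 0 < t < T -> is_derive t 1 X (dX t)) ->
  (forall t, 0 < t < T -> dX t = - A (X t) + t^-1 *: (X0 - X t)) ->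
  forall t, 0 < t < T -> forall c : R,
  vint 0 t (fun s => (c * s) *: A (X s)) = (- c * t) *: (X t - X0).
Proof.
move=> cA X00 Xr hd hode t /andP[t0 tT] c.
have Xc : forall u, 0 < u < T -> {for u, continuous X}.
  move=> u uT; have [dXu _] := hd u uT.
  exact/differentiable_continuous/derivable1_diffP.
have AXc : forall u i, 0 < u < T -> {for u, continuous (fun s => A (X s) ord0 i)}.
  move=> u i uT; apply: cvg_coord; exact: (continuous_comp (Xc u uT) (cA _)).
have Xic : forall u i, 0 < u < T -> {for u, continuous (fun s => X s ord0 i)}.
  move=> u i uT; apply: cvg_coord; exact: Xc.
have AXr : forall i, (fun s => A (X s) ord0 i) @ 0^'+ --> A X0 ord0 i.
  move=> i; apply: cvg_coord; exact: (cvg_trans (cvg_app _ Xr) (cA X0)).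
have Xir : forall i, (fun s => X s ord0 i) @ 0^'+ --> X0 ord0 i.
  move=> i; exact: cvg_coord.
have idc : forall u : R, (fun s : R => s) @ u --> u by move=> u; exact: cvg_id.
apply/matrixP => i0 i; rewrite (ord1 i0) !mxE.
under eq_Rintegral => s _ do rewrite mxE.
pose F := fun u => - c * (u * (X u ord0 i - X0 ord0 i)).
have dF : forall u, 0 < u < T ->
    is_derive u (1:R) F (c * u * A (X u) ord0 i).
  move=> u uT.
  have hXi := @is_derive_coord R d X u (dX u) i (hd u uT).
  have := @is_deriveM R R^o (fun x => x) (fun x => X x ord0 i - X0 ord0 i) u 1 1 (dX u ord0 i - 0) _ _.
  move=> /(_ (is_derive_id _ _) (is_deriveB hXi (is_derive_cst _ _ _))) H.
  have := is_deriveZ (- c) H.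
  move=> H2; apply: is_derive_eq H2 _.
  rewrite hode // !mxE /GRing.scale /=.
  move: uT => /andP[u0 _].
  by field; rewrite gt_eqF.
have tT' : 0 < t < T by rewrite t0 tT.
rewrite (@Rint_FTC2 _ _ F) //.
- by rewrite /F; ring.
- apply/continuous_within_itvP => //; split.
  + move=> u; rewrite in_itv /= => /andP[u0 ut].
    have uT : 0 < u < T by rewrite u0 (lt_trans ut tT).
    apply: cvgM; [apply: cvgM; [exact: cvg_cst|exact: idc]|exact: AXc].
  + rewrite X00; apply: cvgM; [apply: cvgM; [exact: cvg_cst|]|exact: AXr].
    exact: cvg_at_right_filter.
  + apply: cvg_at_left_filter.
    apply: cvgM; [apply: cvgM; [exact: cvg_cst|exact: idc]|exact: AXc].
- split.
  + move=> u; rewrite in_itv /= => /andP[u0 ut].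
    have uT : 0 < u < T by rewrite u0 (lt_trans ut tT).
    by have [] := dF u uT.
  + rewrite /F X00; apply: cvgM; first exact: cvg_cst.
    apply: cvgM; first exact: cvg_at_right_filter.
    by apply: cvgB; [exact: Xir|exact: cvg_cst].
  + apply: cvg_at_left_filter; rewrite /F.
    apply: cvgM; first exact: cvg_cst.
    apply: cvgM; first exact: idc.
    by apply: cvgB; [exact: Xic|exact: cvg_cst].
- move=> u; rewrite in_itv /= => /andP[u0 ut].
  have uT : 0 < u < T by rewrite u0 (lt_trans ut tT).
  by rewrite derive1E; have [_ ->] := dF u uT.
Qed.

Lemma part2 (R : realType) d (A : 'rV[R]_d -> 'rV[R]_d) (T : R)
  (X dX : R -> 'rV[R]_d) :
  continuous A -> 0 < T ->
  is_rderive X 0 (dX 0) ->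
  (forall t, 0 < t < T -> is_derive t 1 X (dX t)) ->
  (forall t, 0 <= t < T -> dX t = hkernel_rhs (hdual T (@anchor_Hreg R)) A X t) ->
  let Z := fun t => - dX t - A (X t) in
     Z 0 = 0 /\
     is_rderive Z 0 (- (T - 0)^-1 *: Z 0 - (T - 0)^-1 *: A (X 0)) /\
     (forall t, 0 < t < T ->
        dX t = - Z t - A (X t) /\
        is_derive t 1 Z (- (T - t)^-1 *: Z t - (T - t)^-1 *: A (X t))).
Proof.
move=> cA T0 rd0 hd hk Z.
have Xr : X x @[x --> 0^'+] --> X 0.
  have H : (fun h => X 0 + h *: (h^-1 *: (X (h + 0) - X 0))) @ 0^'+ --> X 0 + 0 *: dX 0.
    apply: cvgD; first exact: cvg_cst.
    apply: cvgZ; last exact: rd0.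
    exact: cvg_at_right_filter cvg_id.
  rewrite scale0r addr0 in H.
  apply: (cvg_trans _ H); apply: near_eq_cvg; near=> h.
  have h0 : 0 < h by near: h; exact: nbhs_right_gt.
  by rewrite scalerA mulfV ?gt_eqF // scale1r addr0 addrC subrK.
have Xc : forall u, 0 < u < T -> {for u, continuous X}.
  move=> u uT; have [dXu _] := hd u uT.
  exact/differentiable_continuous/derivable1_diffP.
have AXc : forall u i, 0 < u < T -> {for u, continuous (fun s => A (X s) ord0 i)}.
  move=> u i uT; apply: cvg_coord; exact: (continuous_comp (Xc u uT) (cA _)).
have AXr : forall i, (fun s => A (X s) ord0 i) @ 0^'+ --> A (X 0) ord0 i.
  move=> i; apply: cvg_coord; exact: (cvg_trans (cvg_app _ Xr) (cA (X 0))).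
have idc : forall u : R, (fun s : R => s) @ u --> u by move=> u; exact: cvg_id.
have wc : forall u, u != T -> {for u, continuous (fun s : R => ((T - s)^+2)^-1)}.
  move=> u uT; apply: continuousV.
    by rewrite expf_neq0 // subr_eq0 eq_sym.
  have e : (fun s : R => (T - s)^+2) = (fun s => (T - s) * (T - s)).
    by apply/funext => s; rewrite expr2.
  rewrite /continuous_at e.
  by apply: cvgM; apply: cvgB; [exact: cvg_cst|exact: idc|exact: cvg_cst|exact: idc].
pose g i s := ((T - s)^+2)^-1 * A (X s) ord0 i.
have gc : forall u i, 0 < u < T -> {for u, continuous (g i)}.
  move=> u i uT; apply: cvgM; last exact: AXc.
  by apply: wc; move: uT => /andP[_]; rewrite lt_neqAle => /andP[].
have gr : forall i, g i @ 0^'+ --> g i 0.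
  move=> i; apply: cvgM; last exact: AXr.
  by apply: cvg_at_right_filter; apply: wc; rewrite lt_eqF.
have gw : forall i b, 0 < b < T -> {within `[0, b], continuous (g i)}.
  move=> i b /andP[b0 bT]; apply/continuous_within_itvP => //; split.
  + move=> u; rewrite in_itv /= => /andP[u0 ub]; apply: gc.
    by rewrite u0 (lt_trans ub bT).
  + exact: gr.
  + by apply: cvg_at_left_filter; apply: gc; rewrite b0 bT.
have gint : forall i t, 0 <= t < T -> (@lebesgue_measure R).-integrable `[0, t] (EFin \o g i).
  move=> i t /andP[t0 tT].
  have bT : 0 < (t + T) / 2 < T.
    apply/andP; split; first by rewrite divr_gt0 // ltr_wpDl.
    by rewrite ltr_pdivrMr // mulr2n mulrDr mulr1 ltrD2r.
  have H := cint _ _ _ (gw i _ bT).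
  apply: (integrableS _ _ _ H) => //.
  apply: subset_itvl; rewrite bnd_simp ler_pdivlMr // mulr2n mulrDr mulr1 lerD2l ltW //.
pose V t : 'rV[R]_d := \row_i \int[@lebesgue_measure R]_(s in `[0, t]) g i s.
have ZV : forall t, 0 <= t < T -> Z t = - (T - t) *: V t.
  move=> t tT; rewrite /Z hk // /hkernel_rhs; apply/matrixP => i0 i.
  rewrite (ord1 i0) !mxE.
  under eq_Rintegral => s _ do rewrite mxE /hdual /anchor_Hreg.
  have -> : \int[@lebesgue_measure R]_(s in `[0, t]) (- ((T - t) / (T - s) ^+ 2) * A (X s) ord0 i)
      = \int[@lebesgue_measure R]_(s in `[0, t]) (- (T - t) * g i s).
    apply: eq_Rintegral => s _; rewrite /g; ring.
  rewrite RintegralZl //; last exact: gint.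
  ring.
have Z0 : Z 0 = 0.
  rewrite ZV; last by rewrite lexx T0.
  have -> : V 0 = 0.
    apply/matrixP => i0 i; rewrite !mxE set_itv1.
    exact: Rintegral_set1.
  by rewrite scaler0.
split; first exact: Z0.
split.
  rewrite Z0 /is_rderive; apply: cvg_rowP => i.
  have -> : (- (T - 0)^-1 *: (0 : 'rV[R]_d) - (T - 0)^-1 *: A (X 0)) ord0 i = (0 - T) * g i 0.
    by rewrite !mxE /g; field; rewrite gt_eqF.
  have L : (fun h => (h - T) * (h^-1 * \int[@lebesgue_measure R]_(s in `[0, h]) g i s)) @ 0^'+ --> (0 - T) * g i 0.
    apply: cvgM.
      by apply: cvg_at_right_filter; apply: cvgB; [exact: idc|exact: cvg_cst].
    apply: (@rderiv_int _ _ (T / 2)); first by rewrite divr_gt0.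
    apply: gw; rewrite divr_gt0 //= ltr_pdivrMr // mulr2n mulrDr mulr1 ltrDl //.
  apply: cvg_trans L; apply: near_eq_cvg; near=> h.
  have h0 : 0 < h by near: h; exact: nbhs_right_gt.
  have hT : h < T by near: h; exact: nbhs_right_lt.
  rewrite Z0 addr0 subr0 ZV ?(ltW h0) ?hT // !mxE.
  ring.
move=> t /andP[t0 tT]; split; first by rewrite /Z opprD !opprK addrK.
have tT' : 0 < t < T by rewrite t0 tT.
have nearZ : \forall u \near t, (fun u => - (T - u) *: V u) u = Z u.
  near=> u.
  have : u \in `]0, T[ by near: u; apply: near_in_itvoo; rewrite in_itv /= t0 tT.
  rewrite in_itv /= => /andP[u0 uT].
  by rewrite ZV // (ltW u0) uT.
apply: (near_eq_is_derive nearZ).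
apply: is_derive_row => i.
have -> : (fun x => (- (T - x) *: V x) ord0 i) =
    (fun x => - (T - x) * \int[@lebesgue_measure R]_(s in `[0, x]) g i s).
  by apply/funext => x; rewrite !mxE.
have dFi : is_derive t (1:R) (fun x => \int[@lebesgue_measure R]_(s in `[0, x]) g i s) (g i t).
  have bT : 0 < (t + T) / 2 < T.
    apply/andP; split; first by rewrite divr_gt0 // ltr_wpDl // ltW.
    by rewrite ltr_pdivrMr // mulr2n mulrDr mulr1 ltrD2r.
  have tb : t < (t + T) / 2.
    by rewrite ltr_pdivlMr // mulr2n mulrDr mulr1 ltrD2l.
  have intb := gint i ((t + T) / 2) (introT andP (conj (ltW (proj1 (andP bT))) (proj2 (andP bT)))).
  have [dF F'] := @continuous_FTC1_closed R (g i) 0 t ((t + T) / 2) tb intb t0 (gc t i tT').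
  by apply: DeriveDef => //; rewrite -derive1E.
have := @is_deriveM R R^o (fun x => - (T - x)) _ t 1 (- (0 - 1)) (g i t)
  (is_deriveN (is_deriveB (is_derive_cst _ _ _) (is_derive_id _ _))) dFi.
move=> H; apply: is_derive_eq H _.
have := ZV t; rewrite (ltW t0) tT => /(_ isT) /(congr1 (fun M : 'rV[R]_d => M ord0 i)).
rewrite !mxE => ->.
rewrite /GRing.scale /= /g.
by field; rewrite subr_eq0 gt_eqF.
Unshelve. all: by end_near. Qed.

Theorem proposition7p2 (R : realType) (d : nat)
  (A : 'rV[R]_d -> 'rV[R]_d) (X0 : 'rV[R]_d) (T : R) :
  lipschitz A -> 0 < T ->
  (* (i) Anchor ODE  ==>  H-kernel form with H(t,s) = -s/t^2 + delta(s-t) *)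
  (forall (X dX : R -> 'rV[R]_d),
     X 0 = X0 ->
     X x @[x --> 0^'+] --> X0 ->
     (forall t, 0 < t < T -> is_derive t 1 X (dX t)) ->
     (forall t, 0 < t < T -> dX t = - A (X t) + t^-1 *: (X0 - X t)) ->
     forall t, 0 < t < T ->
       dX t = hkernel_rhs (@anchor_Hreg R) A X t /\
       dX t = (t ^+ 2)^-1 *: vint 0 t (fun s => s *: A (X s)) - A (X t))
  /\
  (* (ii) H-dual ODE  ==>  Dual-Anchor ODE *)
  (forall (X dX : R -> 'rV[R]_d),
     X 0 = X0 ->
     is_rderive X 0 (dX 0) ->
     (forall t, 0 < t < T -> is_derive t 1 X (dX t)) ->
     (forall t, 0 <= t < T -> dX t = hkernel_rhs (hdual T (@anchor_Hreg R)) A X t) ->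
     let Z := fun t => - dX t - A (X t) in
     (forall t, 0 <= t < T ->
        hdual T (@anchor_Hreg R) t =1 (fun s => - ((T - t) / (T - s) ^+ 2))) /\
     Z 0 = 0 /\
     is_rderive Z 0 (- (T - 0)^-1 *: Z 0 - (T - 0)^-1 *: A (X 0)) /\
     (forall t, 0 < t < T ->
        dX t = - Z t - A (X t) /\
        is_derive t 1 Z (- (T - t)^-1 *: Z t - (T - t)^-1 *: A (X t)))).
Proof.
move=> hA T0; have cA : continuous A := @lip_cont_rV R d A hA.
split.
- move=> X dX X00 Xr hd hode t tT.
  have key := @part1 R d A X0 T X dX cA X00 Xr hd hode t tT.
  have t0 : t != 0 by case/andP: tT => t0 _; rewrite gt_eqF.
  have k1 : vint 0 t (fun s => s *: A (X s)) = (- 1 * t) *: (X t - X0).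
    by rewrite -key; congr vint; apply/funext => s; rewrite mul1r.
  have k2 : vint 0 t (fun s => anchor_Hreg t s *: A (X s)) =
      (- (- (t ^+ 2)^-1) * t) *: (X t - X0).
    by rewrite -key; congr vint; apply/funext => s; rewrite /anchor_Hreg mulNr mulrC.
  split.
  + rewrite /hkernel_rhs k2 hode //; apply/matrixP => i j; rewrite !mxE.
    by field.
  + rewrite k1 hode //; apply/matrixP => i j; rewrite !mxE.
    by field.
- move=> X dX X00 rd hd hk Z; split.
    by move=> t _ s.
  exact: (@part2 R d A T X dX cA T0 rd hd hk).
Qed.
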